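(* Let $V$ be a finite nonempty set and $f:\{0,1\}^V\to\{0,1\}^V$ an and-net. If for every $1\le k\le |V|$ there are at most $2^k-1$ points $x\in\{0,1\}^V$ such that $Gf(x)$ has a chordless positive cycle of length $k$, then $f$ has at most one fixed point.
   Context: For $x^{j\alpha}$ the point equal to $x$ except its $j$-component is $\alpha$, the local interaction graph $Gf(x)$ is the signed digraph on $V$ with a positive arc from $j$ to $i$ if $f_i(x^{j1})-f_i(x^{j0})=1$ and a negative arc if it equals $-1$; the global interaction graph $G(f)$ has a positive (resp. negative) arc from $j$ to $i$ iff such an arc exists in $Gf(x)$ for at least one $x$. $f$ is an and-net if $G(f)$ has at most one arc from $j$ to $i$ for all $i,j$ and for every $i$ and $x$: $f_i(x)=1$ iff $G(f)$ has no positive arc $j\to i$ with $x_j=0$ and no negative arc $j\to i$ with $x_j=1$. A cycle of a signed digraph $G$ is a subgraph whose underlying unsigned digraph is a directed cycle (length = number of arcs); positive if it has an even number of negative arcs; chordless if its underlying unsigned digraph is an induced subgraph of the underlying unsigned digraph of $G$. *)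

(* Defs.v *)
From mathcomp Require Import all_boot.
Set Implicit Arguments. Unset Strict Implicit. Unset Printing Implicit Defensive.

Section BoolNets.
Variable V : finType.

Definition conf := {ffun V -> bool}.

Definition upd (x : conf) (j : V) (a : bool) : conf :=
  [ffun i => if i == j then a else x i].

Variable f : conf -> conf.

(* local interaction graph Gf(x): positive arc j -> i iff f_i(x^{j1}) - f_i(x^{j0}) = 1 *)
Definition lpos (x : conf) (j i : V) : bool :=
  f (upd x j true) i && ~~ f (upd x j false) i.
Definition lneg (x : conf) (j i : V) : bool :=
  ~~ f (upd x j true) i && f (upd x j false) i.
Definition larc (x : conf) (j i : V) : bool := lpos x j i || lneg x j i.

Definition gpos (j i : V) : bool := [exists x, lpos x j i].
Definition gneg (j i : V) : bool := [exists x, lneg x j i].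

Definition and_net : Prop :=
  (forall i j : V, ~~ (gpos j i && gneg j i)) /\
  (forall (i : V) (x : conf),
     f x i = [forall j, ~~ (gpos j i && ~~ x j) && ~~ (gneg j i && x j)]).

(* Since Gf(x) has at most one arc from j to i, the cycle subgraph is
   determined by c. *)
Definition is_cycle (x : conf) (c : seq V) : bool :=
  (0 < size c) && uniq c && cycle (larc x) c.

Definition positive_cycle (x : conf) (c : seq V) : bool :=
  ~~ odd (count (fun u => lneg x u (next c u)) c).

Definition chordless (x : conf) (c : seq V) : bool :=
  all (fun u => all (fun v => larc x u v ==> (v == next c u)) c) c.

Definition has_chordless_pos_cycle (x : conf) (k : nat) : bool :=
  [exists c : k.-tuple V,
     [&& is_cycle x c, positive_cycle x c & chordless x c]].

Definition fixed_point (x : conf) : bool := f x == x.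

End BoolNets.

(* Main.v *)
Require Import Defs.
From mathcomp Require Import all_boot.
Set Implicit Arguments. Unset Strict Implicit. Unset Printing Implicit Defensive.


Section Comb.
Variable V : finType.
Variable E : rel V.
Variable col : V -> bool.

Definition inS (S : {set V}) i := [set l in S | E l i].
Definition Ap (S : {set V}) := [set i in S | ~~ col i || (#|inS S i| <= 1)].
Definition Op (S : {set V}) := [set i in S | col i || (#|inS S i| <= 1)].
Definition chl (c : seq V) := {in c &, forall u v, E u v -> v = next c u}.
Definition good (S : {set V}) (c : seq V) := forall l i j, l \in S -> l \notin c ->
  i \in c -> j \in c -> E l i -> E l j -> col i = col j.
Definition hasin (S : {set V}) := forall i, i \in S -> exists2 l, l \in S & E l i.

Lemma walk (S U : {set V}) (g : V -> V) s : s \in S -> U \subset S ->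
  (forall v, v \in S -> (g v \in U) && E v (g v)) ->
  exists c, [/\ 0 < size c, uniq c, {subset c <= U} & cycle E c].
Proof.
move=> sS /subsetP US Hg.
have iterS : forall n, iter n g s \in S.
  by elim=> [|n IH] //=; case/andP: (Hg _ IH) => /US.
have := looping_order g s; rewrite /looping => /trajectP [i lti Hi].
set w := iter i g s.
have wS : w \in S by apply: iterS.
have Hw : exists k, iter k.+1 g w = w.
  exists (order g s - i).-1; rewrite prednK ?subn_gt0 // /w -iterD subnK //.
  exact: ltnW.
have fc : fcycle g (orbit g w) := all_iffLR (@orbitPcycle _ g w) 3 0 Hw.
have cS : {subset orbit g w <= S}.
  move=> y; rewrite -fconnect_orbit => /iter_findex <-.
  by rewrite /w -iterD; apply: iterS.
have cyc : cycle E (orbit g w).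
  apply: (sub_in_cycle (P := mem S) (e := frel g)) => //.
  - by move=> a b aS _ /= /eqP <-; case/andP: (Hg _ aS).
  - by apply/allP => y /cS.
exists (orbit g w); split.
- by rewrite size_orbit order_gt0.
- exact: orbit_uniq.
- move=> y yc; have := prev_cycle fc yc; rewrite /= => /eqP <-.
  have pS : prev (orbit g w) y \in S by apply: cS; rewrite mem_prev.
  by case/andP: (Hg _ pS).
- exact: cyc.
Qed.


Lemma ApS (S : {set V}) : {subset Ap S <= S}.
Proof. by move=> i; rewrite inE => /andP[]. Qed.
Lemma OpS (S : {set V}) : {subset Op S <= S}.
Proof. by move=> i; rewrite inE => /andP[]. Qed.

Lemma le1_prev (S : {set V}) (c : seq V) l i : {subset c <= S} -> cycle E c -> l \in S -> i \in c ->
  E l i -> #|inS S i| <= 1 -> l = prev c i.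
Proof.
move=> cS cyc lS ic Eli /card_le1_eqP H.
apply: H; rewrite inE ?lS ?Eli //.
by rewrite cS ?mem_prev //= (prev_cycle cyc ic).
Qed.

Lemma goodA (S : {set V}) (c : seq V) l i : {subset c <= Ap S} -> cycle E c -> l \in S -> l \notin c ->
  i \in c -> E l i -> ~~ col i.
Proof.
move=> cA cyc lS lc ic Eli.
have := cA _ ic; rewrite inE => /andP[iS /orP[//|le1]].
have cS : {subset c <= S} by move=> y /cA /ApS.
have := le1_prev cS cyc lS ic Eli le1 => El.
by move: lc; rewrite El mem_prev ic.
Qed.

Lemma goodO (S : {set V}) (c : seq V) l i : {subset c <= Op S} -> cycle E c -> l \in S -> l \notin c ->
  i \in c -> E l i -> col i.
Proof.
move=> cA cyc lS lc ic Eli.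
have := cA _ ic; rewrite inE => /andP[iS /orP[//|le1]].
have cS : {subset c <= S} by move=> y /cA /OpS.
have := le1_prev cS cyc lS ic Eli le1 => El.
by move: lc; rewrite El mem_prev ic.
Qed.

Lemma hasin_cycle (c : seq V) : 0 < size c -> cycle E c -> hasin [set x in c] /\ [set x in c] != set0.
Proof.
move=> sz cyc; split.
  move=> i; rewrite inE => ic; exists (prev c i); rewrite ?inE ?mem_prev //.
  exact: prev_cycle.
case: c sz cyc => // a c _ _; apply/set0Pn; exists a; by rewrite inE mem_head.
Qed.

Definition gc (S : {set V}) (c : seq V) := [/\ 0 < size c, uniq c, {subset c <= S}, cycle E c & chl c /\ good S c].

Lemma notAp (S : {set V}) i : i \in S -> i \notin Ap S -> col i.
Proof. by move=> iS; rewrite inE iS /= negb_or negbK => /andP[]. Qed.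
Lemma notOp (S : {set V}) i : i \in S -> i \notin Op S -> ~~ col i.
Proof. by move=> iS; rewrite inE iS /= negb_or => /andP[]. Qed.

Lemma remove_v (S : {set V}) (P : {set V}) v : v \in S -> S != set0 -> hasin S ->
  {subset P <= S} ->
  (forall i, i \in S -> i \notin P -> 1 < #|inS S i|) ->
  (forall w, w \in P -> ~~ E v w) ->
  (forall i, i \in S -> #|inS S i| <= 1 -> i \in P) ->
  [/\ #|S :\ v| < #|S|, S :\ v != set0 & hasin (S :\ v)].
Proof.
move=> vS nS hS PS nP vP le1P.
have cardT : #|S| = (#|S :\ v|).+1 by rewrite (cardsD1 v S) vS.
have hT : hasin (S :\ v).
  move=> i; rewrite in_setD1 => /andP[iv iS].
  case: (boolP (i \in P)) => [iP | niP].
    have [l lS Eli] := hS i iS; exists l => //.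
    rewrite in_setD1 lS andbT; apply/eqP => lv; subst l.
    by move: (vP _ iP); rewrite Eli.
  have gt1 := nP _ iS niP.
  have : 0 < #|inS S i :\ v|.
    move: gt1; rewrite (cardsD1 v (inS S i)).
    by case: (v \in inS S i) => /=; [rewrite add1n ltnS | rewrite add0n; apply: ltnW].
  case/card_gt0P => l; rewrite in_setD1 inE => /and3P[lv lS Eli].
  by exists l => //; rewrite in_setD1 lv lS.
split => //; first by rewrite cardT.
apply/negP => /eqP T0.
have [l lS Elv] := hS v vS.
have lv : l = v.
  apply/eqP; apply: contraT => lv.
  have : l \in S :\ v by rewrite in_setD1 lv lS.
  by rewrite T0 inE.
subst l.
have : #|inS S v| <= 1.
  apply: leq_trans (subset_leq_card (_ : inS S v \subset S)) _.
    by apply/subsetP => x; rewrite inE => /andP[].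
  by rewrite cardT T0 cards0.
by move/(le1P _ vS)/vP; rewrite Elv.
Qed.

Lemma comb n : forall S : {set V}, #|S| < n -> S != set0 -> hasin S ->
  exists c, gc S c.
Proof.
elim: n => // n IH S ltS nS hS.
case: (boolP [exists v in S, [forall w in Ap S, ~~ E v w]]) => [/exists_inP [v vS /forall_inP vA] | nA].
  have h1 : forall i, i \in S -> i \notin Ap S -> 1 < #|inS S i|.
    by move=> i iS; rewrite inE iS /= negb_or -ltnNge => /andP[].
  have h2 : forall i, i \in S -> #|inS S i| <= 1 -> i \in Ap S.
    by move=> i iS le1; rewrite inE iS le1 orbT.
  have [ltT nT hT] := remove_v vS nS hS (@ApS S) h1 vA h2.
  have [c [sz uc cT cyc [ch gd]]] := IH _ (leq_trans ltT ltS) nT hT.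
  have cS : {subset c <= S} by move=> y /cT; rewrite in_setD1 => /andP[].
  exists c; split => //; split => // l i j lS lc ic jc Eli Elj.
  case: (eqVneq l v) => [lv | lv].
    subst l.
    have iA : i \notin Ap S by apply: contraL Eli => /vA.
    have jA : j \notin Ap S by apply: contraL Elj => /vA.
    by rewrite (notAp (cS _ ic) iA) (notAp (cS _ jc) jA).
  by apply: (gd l) => //; rewrite in_setD1 lv.
case: (boolP [exists v in S, [forall w in Op S, ~~ E v w]]) => [/exists_inP [v vS /forall_inP vA] | nO].
  have h1 : forall i, i \in S -> i \notin Op S -> 1 < #|inS S i|.
    by move=> i iS; rewrite inE iS /= negb_or -ltnNge => /andP[].
  have h2 : forall i, i \in S -> #|inS S i| <= 1 -> i \in Op S.
    by move=> i iS le1; rewrite inE iS le1 orbT.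
  have [ltT nT hT] := remove_v vS nS hS (@OpS S) h1 vA h2.
  have [c [sz uc cT cyc [ch gd]]] := IH _ (leq_trans ltT ltS) nT hT.
  have cS : {subset c <= S} by move=> y /cT; rewrite in_setD1 => /andP[].
  exists c; split => //; split => // l i j lS lc ic jc Eli Elj.
  case: (eqVneq l v) => [lv | lv].
    subst l.
    have iA : i \notin Op S by apply: contraL Eli => /vA.
    have jA : j \notin Op S by apply: contraL Elj => /vA.
    by rewrite (negbTE (notOp (cS _ ic) iA)) (negbTE (notOp (cS _ jc) jA)).
  by apply: (gd l) => //; rewrite in_setD1 lv.
have [s0 s0S] := set0Pn _ nS.
have walkP : forall P : {set V}, P \subset S ->
    ~~ [exists v in S, [forall w in P, ~~ E v w]] ->
    exists c, [/\ 0 < size c, uniq c, {subset c <= P} & cycle E c].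
  move=> P PS nP.
  have HP : forall v, v \in S -> [exists w in P, E v w].
    move=> v vS; apply: contraR nP => H; apply/exists_inP; exists v => //.
    apply/forall_inP => w wP; apply: contra H => Ew; apply/exists_inP; by exists w.
  pose g v := odflt v [pick w in P | E v w].
  apply: (walk (S := S) (U := P) (g := g) s0S PS) => v vS.
  rewrite /g; case: pickP => [w /andP[wP Ew] | none] /=; first by rewrite wP Ew.
  by case/exists_inP: (HP v vS) => w wP Ew; move: (none w); rewrite wP Ew.
have reduce : forall P : {set V}, P \subset S -> forall c,
    [/\ 0 < size c, uniq c, {subset c <= P} & cycle E c] ->
    (forall c', {subset c' <= P} -> cycle E c' -> good S c') ->
    (exists c, gc S c) \/ (forall i, i \in S -> i \in P).
  move=> P /subsetP PS c [sz uc cP cyc] gP.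
  have [hT nT] := hasin_cycle sz cyc.
  case: (ltnP #|[set x in c]| #|S|) => [lt | ge].
    have [c' [sz' uc' cT cyc' [ch' _]]] := IH _ (leq_trans lt ltS) nT hT.
    have cP' : {subset c' <= P} by move=> y /cT; rewrite inE => /cP.
    left; exists c'; split => //; first by move=> y /cP' /PS.
    by split => //; apply: gP.
  right => i iS.
  have : [set x in c] == S.
    by rewrite eqEcard ge andbT; apply/subsetP => x; rewrite inE => /cP /PS.
  by move/eqP => eqS; move: iS; rewrite -eqS inE => /cP.
have [cA hcA] := walkP _ (introT subsetP (@ApS S)) nA.
have gA : forall c', {subset c' <= Ap S} -> cycle E c' -> good S c'.
  move=> c' cP cyc l i j lS lc ic jc Eli Elj.
  by rewrite (negbTE (goodA cP cyc lS lc ic Eli)) (negbTE (goodA cP cyc lS lc jc Elj)).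
case: (reduce _ (introT subsetP (@ApS S)) _ hcA gA) => [// | allA].
have [cO hcO] := walkP _ (introT subsetP (@OpS S)) nO.
have gO : forall c', {subset c' <= Op S} -> cycle E c' -> good S c'.
  move=> c' cP cyc l i j lS lc ic jc Eli Elj.
  by rewrite (goodO cP cyc lS lc ic Eli) (goodO cP cyc lS lc jc Elj).
case: (reduce _ (introT subsetP (@OpS S)) _ hcO gO) => [// | allO].
have le1 : forall i, i \in S -> #|inS S i| <= 1.
  move=> i iS; move: (allA _ iS) (allO _ iS); rewrite !inE iS /=.
  by case: (col i) => //= ->.
case: hcA => szA ucA cAP cycA.
have cS : {subset cA <= S} by move=> y /cAP /ApS.
exists cA; split => //; split.
  move=> u v uc vc Euv.
  by rewrite (le1_prev cS cycA (cS _ uc) vc Euv (le1 _ (cS _ vc))) next_prev.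
move=> l i j lS lc ic jc Eli Elj.
by move: lc; rewrite (le1_prev cS cycA lS ic Eli (le1 _ (cS _ ic))) mem_prev ic.
Qed.

End Comb.


Lemma count_neq_even (T : eqType) (c : seq T) (h : T -> bool) :
  uniq c -> ~~ odd (count (fun u => h u != h (next c u)) c).
Proof.
move=> uc.
have gen : forall s (a b : pred T),
    odd (count (fun u => a u != b u) s) = odd (count a s) (+) odd (count b s).
  elim => //= x s IH a b; rewrite !oddD IH !oddb.
  by case: (a x); case: (b x); case: (odd (count a s)); case: (odd (count b s)).
rewrite (gen c h (fun u => h (next c u))).
have pm : perm_eq (map (next c) c) c.
  apply: uniq_perm => //; first by rewrite (map_inj_uniq (can_inj (prev_next uc))).
  move=> y; apply/mapP/idP => [[u uc' ->] | yc]; first by rewrite mem_next.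
  by exists (prev c y); rewrite ?mem_prev ?next_prev.
have := (permP pm h); rewrite count_map => eq1.
by rewrite [X in _ (+) X](_ : _ = odd (count h c)) ?addbb // -eq1.
Qed.

Section Net.
Variable V : finType.
Variable f : conf V -> conf V.
Hypothesis NB : forall i j : V, ~~ (gpos f j i && gneg f j i).
Hypothesis fE : forall (i : V) (x : conf V),
     f x i = [forall j, ~~ (gpos f j i && ~~ x j) && ~~ (gneg f j i && x j)].

Definition lit j i (x : conf V) := (gpos f j i ==> x j) && (gneg f j i ==> ~~ x j).
Definition garc j i := gpos f j i || gneg f j i.
Definition Rest (x : conf V) j i := [forall l, (l != j) ==> lit l i x].

Lemma fE' x i : f x i = [forall j, lit j i x].
Proof.
by rewrite fE; apply: eq_forallb => j; rewrite /lit; case: (gpos f j i); case: (gneg f j i); case: (x j).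
Qed.

Lemma forall_split (P : pred V) j : [forall l, P l] = P j && [forall l, (l != j) ==> P l].
Proof.
apply/forallP/andP => [H | [Pj /forallP H] l].
  by split => //; apply/forallP => l; apply/implyP.
by case: (eqVneq l j) => [-> // | lj]; move: (H l); rewrite lj.
Qed.

Lemma fsplit x j i : f x i = lit j i x && Rest x j i.
Proof. by rewrite fE' (forall_split _ j). Qed.

Lemma Rest_upd x j i b : Rest (upd x j b) j i = Rest x j i.
Proof.
apply: eq_forallb => l; case: (eqVneq l j) => //= lj.
by rewrite /lit /upd ffunE (negbTE lj).
Qed.

Lemma lit_upd x j i b : lit j i (upd x j b) = (gpos f j i ==> b) && (gneg f j i ==> ~~ b).
Proof. by rewrite /lit /upd ffunE eqxx. Qed.

Lemma lpos_eq x j i : lpos f x j i = gpos f j i && Rest x j i.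
Proof.
rewrite /lpos !(fsplit _ j) !Rest_upd !lit_upd.
move: (NB i j); case: (gpos f j i); case: (gneg f j i); case: (Rest x j i) => //.
Qed.

Lemma lneg_eq x j i : lneg f x j i = gneg f j i && Rest x j i.
Proof.
rewrite /lneg !(fsplit _ j) !Rest_upd !lit_upd.
move: (NB i j); case: (gpos f j i); case: (gneg f j i); case: (Rest x j i) => //.
Qed.

Lemma larc_eq x j i : larc f x j i = garc j i && Rest x j i.
Proof. by rewrite /larc lpos_eq lneg_eq /garc andb_orl. Qed.

Lemma lit_eqv l i (x y : conf V) : x l = y l -> lit l i x = lit l i y.
Proof. by rewrite /lit => ->. Qed.

Lemma lit_noarc l i x : ~~ garc l i -> lit l i x.
Proof. by rewrite /garc negb_or /lit => /andP[/negbTE -> /negbTE ->]. Qed.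

Lemma lit_diff j i (a b : conf V) : lit j i a != lit j i b -> garc j i && (a j != b j).
Proof.
rewrite /lit /garc; case: (gpos f j i); case: (gneg f j i); case: (a j); case: (b j) => //.
Qed.

End Net.

Unset Implicit Arguments.


Theorem corollary11 (V : finType) (f : conf V -> conf V) :
  0 < #|V| ->
  and_net f ->
  (forall k : nat, 1 <= k <= #|V| ->
     #|[set x : conf V | has_chordless_pos_cycle f x k]| <= 2 ^ k - 1) ->
  #|[set x : conf V | fixed_point f x]| <= 1.
Proof.
move=> _ [NB fE] Hk.
rewrite leqNgt; apply/negP => /card_gt1P [x [y [xF yF xy]]].
rewrite !inE /fixed_point in xF yF; move/eqP in xF; move/eqP in yF.
pose D := [set i | x i != y i].
pose E := fun j i => garc f j i.
have nD : D != set0.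
  apply: contraNneq xy => D0; apply/eqP/ffunP => i; apply/eqP; apply: contraT => H.
  have : i \in D by rewrite inE.
  by rewrite D0 inE.
have lit_xy : forall i, i \in D -> exists j, lit f j i x != lit f j i y.
  move=> i; rewrite inE => iD.
  have : [forall j, lit f j i x] != [forall j, lit f j i y].
    by rewrite -!(fE' fE) xF yF.
  case: (boolP [exists j, lit f j i x != lit f j i y]) => [/existsP // | /existsPn H].
  by rewrite (eq_forallb (fun j => eqP (negbNE (H j)))) eqxx.
have hD : hasin E D.
  move=> i iD; have [j hj] := lit_xy i iD.
  case/andP: (lit_diff hj) => Eji xyj; exists j => //; by rewrite inE.
have [c [sz uc cD cyc [ch gd]]] := comb (fun i => x i) (ltnSn #|D|) nD hD.
pose ui i : conf V := if x i then x else y.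
have ui_true : forall i, i \in D -> forall l, lit f l i (ui i).
  move=> i; rewrite inE => iD l.
  have : f (ui i) i by rewrite /ui; case: ifP => xi; rewrite ?xF ?yF //; move: iD; rewrite xi; case: (y i).
  by rewrite (fE' fE) => /forallP.
pose z : conf V := [ffun l => if [pick i in c | E l i] is Some i then ui i l else x l].
have key : forall p : conf V, (forall l, l \notin c -> p l = z l) ->
    has_chordless_pos_cycle f p (size c).
  move=> p Hp.
  have pl : forall i l, i \in c -> l \notin c -> E l i -> p l = ui i l.
    move=> i l ic lc Eli; rewrite Hp // /z ffunE.
    case: pickP => [i' /andP[i'c Eli'] | none]; last by move: (none i); rewrite ic Eli.
    case: (boolP (l \in D)) => lD.
      by have /= e := gd l i i' lD lc ic i'c Eli Eli'; rewrite /ui e.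
    move: lD; rewrite inE negbK => /eqP xyl.
    by rewrite /ui; case: (x i); case: (x i'); rewrite ?xyl.
  have nxt : forall u l, u \in c -> l != u -> E l (next c u) -> l \notin c.
    move=> u l uin lu Eln; apply/negP => lc.
    have := ch l (next c u) lc; rewrite mem_next => /(_ uin Eln) h.
    by move: lu; rewrite -(prev_next uc l) -h (prev_next uc) eqxx.
  have rest : forall u, u \in c -> Rest f p u (next c u).
    move=> u uin; apply/forallP => l; apply/implyP => lu.
    case: (boolP (garc f l (next c u))) => [Eln | nE]; last exact: lit_noarc.
    have lc := nxt u l uin lu Eln.
    rewrite (lit_eqv _ _ (pl _ _ _ lc Eln)); last by rewrite mem_next.
    by apply: ui_true; apply: cD; rewrite mem_next.
  have sign : forall u i, u \in c -> i \in c -> E u i -> gneg f u i = (x u != x i).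
    move=> u i uin ic Eui.
    have := ui_true i (cD _ ic) u; have := cD _ ic; have := cD _ uin.
    move: Eui (NB i u); rewrite /E /garc /lit /ui !inE.
    by case: (gpos f u i); case: (gneg f u i); case: (x i); case: (y i); case: (x u); case: (y u).
  have larcE : forall u, u \in c -> larc f p u (next c u).
    by move=> u uin; rewrite (larc_eq NB fE) rest // andbT; apply: next_cycle cyc uin.
  apply/existsP; exists (in_tuple c) => /=; apply/and3P; split.
  - rewrite /is_cycle sz uc /=; exact: cycle_from_next.
  - rewrite /positive_cycle.
    rewrite (eq_in_count (a2 := fun u => x u != x (next c u))).
      exact: count_neq_even.
    move=> u uin /=; rewrite (lneg_eq NB fE) rest // andbT sign ?mem_next //.
    exact: next_cycle cyc uin.
  - apply/allP => u uin; apply/allP => v vc; apply/implyP.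
    rewrite (larc_eq NB fE) => /andP[Euv _].
    by rewrite (ch u v uin vc Euv).
pose C := [set v in c].
pose F (B : {set V}) : conf V := [ffun l => if l \in c then l \in B else z l].
have cardC : #|C| = size c by rewrite cardsE; apply/card_uniqP.
have Finj : {in powerset C &, injective F}.
  move=> B1 B2; rewrite !powersetE => /subsetP s1 /subsetP s2 eqF.
  apply/setP => l; have := congr1 (fun p : conf V => p l) eqF; rewrite /F !ffunE.
  case: ifP => // lc _.
  by apply/idP/idP => [/s1 | /s2]; rewrite inE lc.
have sub : [set F B | B in powerset C] \subset [set p : conf V | has_chordless_pos_cycle f p (size c)].
  apply/subsetP => p /imsetP [B _ ->]; rewrite inE; apply: key => l lc.
  by rewrite /F ffunE (negbTE lc).
have := subset_leq_card sub; rewrite (card_in_imset Finj) card_powerset cardC.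
have k1 : 1 <= size c <= #|V|.
  by rewrite sz /= -(card_uniqP uc) max_card.
move/leq_trans/(_ (Hk _ k1)).
have := expn_gt0 2 (size c); case: (2 ^ size c) => // m _.
by rewrite subSS subn0 ltnn.
Qed.
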